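(* Let $(M,d)$ be a compact metric space, $\varphi:M\to M$ continuous, and $\{G_n\}\subset B(M)$ weakly almost additive. Then $\lim_{k\to\infty}\limsup_{n\to\infty}n^{-1}\|G_n-k^{-1}S_nG_k\|_\infty=0$.
   Context: $B(M)$: bounded Borel real functions, $\|f\|_\infty=\sup|f|$; $S_nG=\sum_{k=0}^{n-1}G\circ\varphi^k$. Weakly almost additive: there is a real sequence $\{C_n\}$ with $\lim_nn^{-1}C_n=0$ and $-C_m+G_m+G_n\circ\varphi^m\le G_{m+n}\le C_m+G_m+G_n\circ\varphi^m$ for all $m,n\ge1$. *)

(* Defs.v *)
From HB Require Import structures.
From mathcomp Require Import all_boot all_order all_algebra.
From mathcomp Require Import all_classical all_reals all_analysis.
Set Implicit Arguments. Unset Strict Implicit. Unset Printing Implicit Defensive.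
Import Order.TTheory GRing.Theory Num.Theory.
Import numFieldTopology.Exports.
Local Open Scope classical_set_scope.
Local Open Scope ring_scope.

Definition borel_set (T : topologicalType) (A : set T) : Prop :=
  <<s [set U : set T | open U] >> A.

Definition borel_fun (R : realType) (T : topologicalType) (f : T -> R) : Prop :=
  forall U : set R, open U -> borel_set (f @^-1` U).

Definition in_BM (R : realType) (T : topologicalType) (f : T -> R) : Prop :=
  borel_fun f /\ exists c : R, forall x, `|f x| <= c.

Definition supnorm (R : realType) (T : Type) (f : T -> R) : R :=
  sup (range (fun x => `|f x|)).

Definition birkhoff (R : realType) (T : Type) (phi : T -> T) (n : nat)
  (g : T -> R) : T -> R :=
  fun x => \sum_(0 <= k < n) g (iter k phi x).

Definition weakly_almost_additive (R : realType) (T : Type) (phi : T -> T)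
  (G : nat -> T -> R) (C : nat -> R) : Prop :=
  ((fun n : nat => (n%:R)^-1 * C n) @ \oo --> (0 : R)) /\
  forall m n : nat, (1 <= m)%N -> (1 <= n)%N -> forall x : T,
    - C m + G m x + G n (iter m phi x) <= G (m + n)%N x /\
    G (m + n)%N x <= C m + G m x + G n (iter m phi x).

(* Main.v *)
Require Import Defs.
From HB Require Import structures.
From mathcomp Require Import all_boot all_order all_algebra.
From mathcomp Require Import all_classical all_reals all_analysis.
From mathcomp Require Import ring lra zify.
Import Order.TTheory GRing.Theory Num.Theory.
Import numFieldTopology.Exports.
Local Open Scope classical_set_scope.
Local Open Scope ring_scope.

Lemma blockA (R : realType) (T : Type) (phi : T -> T) (G : nat -> T -> R) (C : nat -> R) :
  (forall m n : nat, (1 <= m)%N -> (1 <= n)%N -> forall x : T,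
    - C m + G m x + G n (iter m phi x) <= G (m + n)%N x /\
    G (m + n)%N x <= C m + G m x + G n (iter m phi x)) ->
  forall k n, (1 <= k)%N -> (1 <= n)%N -> forall q x,
  `|G (q*k + n)%N x - \sum_(0 <= i < q) G k (iter (i*k) phi x) - G n (iter (q*k) phi x)|
    <= q%:R * C k.
Proof.
move=> hadd k n k1 n1; elim=> [|q IH] x.
  by rewrite big_geq // mul0n add0n /= subr0 subrr normr0 mul0r.
have [h1 h2] := hadd k (q * k + n)%N k1 ltac:(lia) x.
have := IH (iter k phi x).
rewrite big_nat_recl // mul0n /=.
have E1 : (q.+1 * k + n = k + (q * k + n))%N by rewrite mulSn addnA.
have E2 : forall i, iter (i.+1 * k) phi x = iter (i * k) phi (iter k phi x).
  by move=> i; rewrite mulSnr iterD.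
rewrite E1 (E2 q).
have E3 : \sum_(0 <= i < q) G k (iter (i.+1 * k) phi x) = \sum_(0 <= i < q) G k (iter (i * k) phi (iter k phi x)).
  by apply: eq_bigr => i _; rewrite E2.
rewrite E3.
move=> /ler_normlP [h3 h4]; apply/ler_normlP; rewrite -natr1; split; lra.
Qed.

Lemma block_sum (R : realType) (a : nat -> R) k q :
  \sum_(0 <= l < q * k) a l = \sum_(0 <= i < q) \sum_(0 <= j < k) a (i * k + j)%N.
Proof.
elim: q => [|q IH]; first by rewrite mul0n !big_geq.
rewrite big_nat_recr //= -IH mulSnr (@big_cat_nat _ _ _ (q * k)) //=; last by rewrite leq_addr.
congr (_ + _).
rewrite -{1}(add0n (q * k)%N) big_addn addKn.
by apply: eq_bigr => j _; rewrite addnC.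
Qed.

Lemma le_sum_term (R : realType) (f : nat -> R) N j :
  (forall i, 0 <= f i) -> (j < N)%N -> f j <= \sum_(0 <= i < N) f i.
Proof.
move=> f0; elim: N => [//|N IH] hj.
rewrite big_nat_recr //=.
have [->|ne] := eqVneq j N.
  by rewrite lerDr sumr_ge0.
have hj' : (j < N)%N by lia.
by apply: (le_trans (IH hj')); rewrite lerDl.
Qed.

Lemma supnorm_le (R : realType) (T : Type) (f : T -> R) B :
  0 <= B -> (forall x, `|f x| <= B) -> supnorm f <= B.
Proof.
move=> B0 hB; rewrite /supnorm.
have [ne|e] := pselect (range (fun x => `|f x|) !=set0).
  by apply: ge_sup => // _ [x _ <-].
have -> : range (fun x => `|f x|) = set0.
  by apply/eqP; apply/negPn/negP => /set0P.
by rewrite sup0.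
Qed.

Lemma supnorm_ge0 (R : realType) (T : Type) (f : T -> R) B :
  (forall x, `|f x| <= B) -> 0 <= supnorm f.
Proof.
move=> hB; rewrite /supnorm.
have [[y [x _ hx]]|e] := pselect (range (fun x => `|f x|) !=set0).
  apply: (le_trans (normr_ge0 (f x))); apply: ub_le_sup; last by exists x.
  by exists B => _ [z _ <-].
have -> : range (fun x => `|f x|) = set0.
  by apply/eqP; apply/negPn/negP => /set0P.
by rewrite sup0.
Qed.
Definition Kc (R : realType) (C b : nat -> R) (k : nat) : R :=
  \sum_(0 <= j < (2 * k).+1) (`|C j| + `|b j|).

Lemma Kc_ge (R : realType) (C b : nat -> R) k j : (j <= 2 * k)%N ->
  `|C j| + `|b j| <= @Kc R C b k.
Proof.
move=> hj; apply: (@le_sum_term R (fun j => `|C j| + `|b j|)) => //.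
Qed.

Lemma main_bound (R : realType) (T : Type) (phi : T -> T) (G : nat -> T -> R) (C b : nat -> R) :
  (forall m n : nat, (1 <= m)%N -> (1 <= n)%N -> forall x : T,
    - C m + G m x + G n (iter m phi x) <= G (m + n)%N x /\
    G (m + n)%N x <= C m + G m x + G n (iter m phi x)) ->
  (forall j x, `|G j x| <= b j) ->
  forall k n, (1 <= k)%N -> (2 * k <= n)%N -> forall x,
  `|G n x - (k%:R)^-1 * birkhoff phi n (G k) x|
    <= n%:R / k%:R * `|C k| + (2 * @Kc R C b k + 2 * `|b k|).
Proof.
move=> hadd hb k n k1 hn x.
set K := @Kc R C b k.
have K0 : 0 <= K by apply: sumr_ge0 => i _; rewrite addr_ge0.
have P1 : (n %/ k * k <= n)%N := leq_divM n k.
have P2 : (n < (n %/ k).+1 * k)%N := ltn_ceil n k1.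
set p := (n %/ k)%N in P1 P2.
have p2 : (2 <= p)%N by nia.
have [q Hq] : exists q, p = q.+1 by exists p.-1; lia.
rewrite Hq mulSnr in P1 P2.
have qkn : (q * k + k <= n)%N by lia.
have nqk : (n < q * k + 2 * k)%N by lia.
have stepa : forall j, (j < k)%N ->
  `|G n x - \sum_(0 <= i < q) G k (iter (i * k + j) phi x)| <= q%:R * `|C k| + 2 * K.
  move=> j jk.
  have qC : q%:R * C k <= q%:R * `|C k| by apply: ler_wpM2l; [exact: ler0n | exact: ler_norm].
  have qC' : - (q%:R * `|C k|) <= q%:R * C k.
    rewrite -mulrN; apply: ler_wpM2l; first exact: ler0n.
    by have := ler_norm (- C k); rewrite normrN => ?; lra.
  case: j jk => [|j] jk.
    set r := (n - q * k)%N.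
    have r1 : (1 <= r)%N by rewrite /r; lia.
    have r2 : (r <= 2 * k)%N by rewrite /r; lia.
    have En : n = (q * k + r)%N by rewrite /r; lia.
    have := @blockA R T phi G C hadd k r k1 r1 q x.
    rewrite -En.
    have -> : \sum_(0 <= i < q) G k (iter (i * k + 0) phi x) =
              \sum_(0 <= i < q) G k (iter (i * k) phi x).
      by apply: eq_bigr => i _; rewrite addn0.
    move=> /ler_normlP [h1 h2].
    have /ler_normlP [h3 h4] := hb r (iter (q * k) phi x).
    have h5 := @Kc_ge R C b k r r2; rewrite -/K in h5.
    have h6 := ler_norm (b r).
    have h7 := normr_ge0 (C r).
    apply/ler_normlP; split; lra.
  set r := (n - q * k - j.+1)%N.
  have r1 : (1 <= r)%N by rewrite /r; lia.
  have r2 : (r <= 2 * k)%N by rewrite /r; lia.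
  have j2 : (j.+1 <= 2 * k)%N by lia.
  have En : n = (j.+1 + (q * k + r))%N by rewrite /r; lia.
  have [g1 g2] := hadd j.+1 (q * k + r)%N isT ltac:(lia) x.
  rewrite -En in g1 g2.
  have := @blockA R T phi G C hadd k r k1 r1 q (iter j.+1 phi x).
  have -> : \sum_(0 <= i < q) G k (iter (i * k) phi (iter j.+1 phi x)) =
            \sum_(0 <= i < q) G k (iter (i * k + j.+1) phi x).
    by apply: eq_bigr => i _; rewrite iterD.
  move=> /ler_normlP [h1 h2].
  have /ler_normlP [h3 h4] := hb r (iter (q * k) phi (iter j.+1 phi x)).
  have /ler_normlP [h3' h4'] := hb j.+1 x.
  have h5 := @Kc_ge R C b k r r2; rewrite -/K in h5.
  have h5' := @Kc_ge R C b k j.+1 j2; rewrite -/K in h5'.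
  have h6 := ler_norm (b r).
  have h6' := ler_norm (b j.+1).
  have h7 := normr_ge0 (C r).
  have h8 := ler_norm (C j.+1).
  have h9 := ler_norm (- C j.+1); rewrite normrN in h9.
  apply/ler_normlP; split; lra.
have stepb : `|k%:R * G n x - \sum_(0 <= j < k) \sum_(0 <= i < q) G k (iter (i * k + j) phi x)|
    <= k%:R * (q%:R * `|C k| + 2 * K).
  have -> : k%:R * G n x = \sum_(0 <= j < k) G n x by rewrite sumr_const_nat subn0 mulr_natl.
  rewrite -sumrB; apply: (le_trans (ler_norm_sum _ _ _)).
  apply: (le_trans (ler_sum_nat (G := fun _ => q%:R * `|C k| + 2 * K) _)).
    by move=> j /andP [_ jk]; apply: stepa.
  by rewrite sumr_const_nat subn0 [in X in _ <= X]mulr_natl.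
have stepc : \sum_(0 <= j < k) \sum_(0 <= i < q) G k (iter (i * k + j) phi x)
   = \sum_(0 <= l < q * k) G k (iter l phi x).
  by rewrite exchange_big_nat (@block_sum R (fun l => G k (iter l phi x))).
rewrite stepc in stepb.
have Eb : birkhoff phi n (G k) x = \sum_(0 <= l < q * k) G k (iter l phi x)
   + \sum_(q * k <= l < n) G k (iter l phi x).
  by rewrite /birkhoff (@big_cat_nat _ _ _ (q * k)) //; lia.
have stepd : `|\sum_(q * k <= l < n) G k (iter l phi x)| <= (2 * k)%:R * `|b k|.
  apply: (le_trans (ler_norm_sum _ _ _)).
  apply: (le_trans (ler_sum_nat (G := fun _ => `|b k|) _)).
    by move=> l _; apply: (le_trans (hb k _)); apply: ler_norm.
  rewrite sumr_const_nat -[X in X <= _]mulr_natl; apply: ler_wpM2r => //; rewrite ler_nat; lia.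
rewrite Eb.
set T1 := \sum_(0 <= l < q * k) _ in stepb *.
set T2 := \sum_(q * k <= l < n) _ in stepd *.
have k0 : 0 < k%:R :> R by rewrite ltr0n.
have -> : G n x - k%:R^-1 * (T1 + T2) = k%:R^-1 * (k%:R * G n x - T1 - T2).
  by field; rewrite lt0r_neq0.
rewrite normrM ger0_norm ?invr_ge0 ?ler0n // ler_pdivrMl //.
have qn : q%:R * k%:R <= n%:R :> R by rewrite -natrM ler_nat; lia.
have E1 : k%:R * (n%:R / k%:R * `|C k| + (2 * K + 2 * `|b k|)) =
   n%:R * `|C k| + k%:R * (2 * K) + (2 * k)%:R * `|b k|.
  by rewrite natrM; field; rewrite lt0r_neq0.
rewrite E1.
have E2 : k%:R * (q%:R * `|C k| + 2 * K) = (q%:R * k%:R) * `|C k| + k%:R * (2 * K).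
  by ring.
rewrite E2 in stepb.
have qn' : (q%:R * k%:R) * `|C k| <= n%:R * `|C k| by apply: ler_wpM2r.
move: stepb stepd => /ler_normlP [s1 s2] /ler_normlP [s3 s4].
apply: (le_trans (ler_normB _ _)).
have := ler_normlP (k%:R * G n x - T1) (q%:R * k%:R * `|C k| + k%:R * (2 * K)).
move=> _.
have A1 : `|k%:R * G n x - T1| <= q%:R * k%:R * `|C k| + k%:R * (2 * K).
  by apply/ler_normlP; split; lra.
have A2 : `|T2| <= (2 * k)%:R * `|b k| by apply/ler_normlP; split; lra.
lra.
Qed.
Lemma birk_bound (R : realType) (T : Type) (phi : T -> T) (g : T -> R) (B : R) n x :
  (forall y, `|g y| <= B) -> `|birkhoff phi n g x| <= n%:R * B.
Proof.
move=> hg; rewrite /birkhoff; apply: (le_trans (ler_norm_sum _ _ _)).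
apply: (le_trans (ler_sum_nat (G := fun _ => B) _)); first by move=> l _; apply: hg.
by rewrite sumr_const_nat subn0 mulr_natl.
Qed.

Lemma key (R : realType) (T : Type) (phi : T -> T) (G : nat -> T -> R) (C b : nat -> R) :
  (forall m n : nat, (1 <= m)%N -> (1 <= n)%N -> forall x : T,
    - C m + G m x + G n (iter m phi x) <= G (m + n)%N x /\
    G (m + n)%N x <= C m + G m x + G n (iter m phi x)) ->
  (forall j x, `|G j x| <= b j) ->
  forall k, (1 <= k)%N ->
  (0 <= limn_esup (fun n : nat =>
       ((n%:R)^-1 *
        supnorm (fun x => G n x - (k%:R)^-1 * birkhoff phi n (G k) x))%:E) <=
   (`|k%:R^-1 * C k|)%:E)%E.
Proof.
move=> hadd hb k k1.
have k0 : 0 < k%:R :> R by rewrite ltr0n.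
apply/andP; split.
  apply: limf_esup_ge0; first exact: filter_not_empty.
  move=> n; rewrite lee_fin; apply: mulr_ge0; first by rewrite invr_ge0 ler0n.
  apply: (@supnorm_ge0 R T _ (`|b n| + k%:R^-1 * (n%:R * `|b k|))) => x.
  apply: (le_trans (ler_normB _ _)); apply: lerD.
    exact: (le_trans (hb n x) (ler_norm _)).
  rewrite normrM ger0_norm ?invr_ge0 ?ler0n //.
  apply: ler_wpM2l; first by rewrite invr_ge0 ler0n.
  apply: birk_bound => y; exact: (le_trans (hb k y) (ler_norm _)).
apply/lee_addgt0Pr => e e0.
set D := 2 * Kc R C b k + 2 * `|b k|.
have D0 : 0 <= D.
  apply: addr_ge0; apply: mulr_ge0 => //.
  by apply: sumr_ge0 => i _; rewrite addr_ge0.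
set N := (2 * k + Num.trunc (D / e)).+1.
apply: (le_trans (ereal_inf_lbound _)).
  by exists [set n | (N <= n)%N]; [exists N | reflexivity].
apply: ge_ereal_sup => _ [n hn <-].
have {}hn : (N <= n)%N by [].
rewrite /N in hn.
rewrite -EFinD lee_fin.
have n0 : 0 < n%:R :> R by rewrite ltr0n; lia.
have h2k : (2 * k <= n)%N by lia.
have hs := (fun H0 => @supnorm_le R T _ _ H0 (@main_bound R T phi G C b hadd hb k n k1 h2k)).
rewrite ler_pdivrMl //.
have hDe : D < n%:R * e.
  rewrite -ltr_pdivrMr //.
  apply: (lt_le_trans (truncnS_gt _)).
  by rewrite ler_nat; apply: leq_trans hn; rewrite ltnS leq_addl.
have H0 : 0 <= n%:R / k%:R * `|C k| + D.
  apply: addr_ge0; last exact: D0.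
  by apply: mulr_ge0; [apply: divr_ge0; apply: ler0n | apply: normr_ge0].
have {}hs := hs H0.
apply: (le_trans hs).
rewrite normrM ger0_norm ?invr_ge0 ?ler0n //.
rewrite -/D.
have -> : n%:R / k%:R * `|C k| = n%:R * (k%:R^-1 * `|C k|) by ring.
lra.
Qed.

Theorem lemma6p2 (R : realType) (M : metricType R) (phi : M -> M)
  (G : nat -> M -> R) :
  compact [set: M] ->
  continuous phi ->
  (forall n, in_BM (G n)) ->
  (exists C : nat -> R, weakly_almost_additive phi G C) ->
  (fun k : nat =>
     limn_esup (fun n : nat =>
       ((n%:R)^-1 *
        supnorm (fun x => G n x - (k%:R)^-1 * birkhoff phi n (G k) x))%:E))
    @ \oo --> (0 : \bar R)%E.
Proof.
move=> _ _ hBM [C [hC hadd]].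
have [b hb] : exists b : nat -> R, forall j x, `|G j x| <= b j.
  have [b hb] := choice (fun n => (hBM n).2).
  by exists b.
apply: (@squeeze_cvge _ _ _ _ (cst 0%E) _ (fun k => (`|k%:R^-1 * C k|)%:E)).
- near=> k.
  have k1 : (1 <= k)%N by near: k; exists 1%N.
  exact: (@key R M phi G C b hadd hb k k1).
- exact: cvg_cst.
- apply: cvg_EFin; first exact: nearW.
  have h := cvg_norm hC; rewrite normr0 in h.
  exact: h.
Unshelve. all: by end_near.
Qed.
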